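(* Let $0=t_0<t_1<\dots<t_n=1$ be a grid. Consider the following random procedure (the remasked AUDM sampler with the exact noise-conditioned denoiser). 1. Draw $U_{t_n}$ uniformly from $\mathsf X$, then draw $X_{t_n}\sim p_{t_n}(\cdot\mid U_{t_n})$. 2. For $i=n-1,n-2,\dots,0$: - draw $X_0'\sim p_{0|t_{i+1}}(\cdot\mid X_{t_{i+1}},U_{t_{i+1}})$; - draw $X_{t_i}\sim q_{t_i|0,t_{i+1}}(\cdot\mid X_0',X_{t_{i+1}})$ (for $t_i=0$ this means $X_{t_0}=X_0'$); - independently over $\ell$, draw $U^\ell_{t_i}$ as follows: if $X^\ell_{t_i}\ne X_0'^{\,\ell}$, set $U^\ell_{t_i}=X^\ell_{t_i}$; otherwise draw $U^\ell_{t_i}\sim\mathrm{Cat}\big(\frac{X_0'^{\,\ell}+\alpha_{t_i}(\mathbf 1-X_0'^{\,\ell})}{1+(K-1)\alpha_{t_i}}\big)$. Then the law of $(X_{t_0},\dots,X_{t_n})$ is the UDM reverse-chain law $$p_{t_n}(\mathbf x_{t_n})\prod_{i=1}^n p_{t_{i-1}|t_i}(\mathbf x_{t_{i-1}}\mid\mathbf x_{t_i}).$$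
   Context: **UDM setup.** - Let $K\ge2$, $L\ge1$ and $\mathsf V=\{1,\dots,K\}$. Tokens are identified with the standard basis vectors of $\mathbb R^K$, and $\mathbf 1$ is the all-ones vector. - $\mathsf X=\mathsf V^L$, with $\mathbf x^\ell$ the $\ell$-th token. $p_0$ is a distribution on $\mathsf X$. - The schedule $\alpha:[0,1]\to[0,1]$ is strictly decreasing, with $\alpha_0=1$ and $\alpha_t\in(0,1)$ for $t\in(0,1]$. Set $\alpha_{t|s}=\alpha_t/\alpha_s$. - The UDM forward kernel is $q_{t|s}(\mathbf x_t\mid\mathbf x_s)=\prod_\ell\langle\mathbf x_t^\ell,\alpha_{t|s}\mathbf x_s^\ell+(1-\alpha_{t|s})\mathbf 1/K\rangle$. - $p_t(\mathbf x)=\sum_{\mathbf x_0}p_0(\mathbf x_0)q_{t|0}(\mathbf x\mid\mathbf x_0)$. - UDM reverse kernel: $p_{s|t}(\mathbf x_s\mid\mathbf x_t)=p_s(\mathbf x_s)q_{t|s}(\mathbf x_t\mid\mathbf x_s)/p_t(\mathbf x_t)$. - UDM bridge: $q_{s|0,t}(\mathbf x_s\mid\mathbf x_0,\mathbf x_t)=q_{t|s}(\mathbf x_t\mid\mathbf x_s)q_{s|0}(\mathbf x_s\mid\mathbf x_0)/q_{t|0}(\mathbf x_t\mid\mathbf x_0)$ for $s>0$, and $q_{0|0,t}(\mathbf x\mid\mathbf x_0,\mathbf x_t)=\mathbf 1\{\mathbf x=\mathbf x_0\}$. **Absorbing lifting.** - For $\mathbf u\in\mathsf X$, define $q_{t|0}(\mathbf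 x_t\mid\mathbf x_0,\mathbf u)=\prod_\ell\langle\mathbf x_t^\ell,\alpha_t\mathbf x_0^\ell+(1-\alpha_t)\mathbf u^\ell\rangle$. - $p_t(\mathbf x\mid\mathbf u)=\sum_{\mathbf x_0}p_0(\mathbf x_0)q_{t|0}(\mathbf x\mid\mathbf x_0,\mathbf u)$. - Noise-conditioned denoiser: $p_{0|t}(\mathbf x_0\mid\mathbf x_t,\mathbf u)=p_0(\mathbf x_0)q_{t|0}(\mathbf x_t\mid\mathbf x_0,\mathbf u)/p_t(\mathbf x_t\mid\mathbf u)$, defined when $p_t(\mathbf x_t\mid\mathbf u)>0$. *)

(* Defs.v *)
From HB Require Import structures.
From mathcomp Require Import all_boot all_order all_algebra.
Set Implicit Arguments. Unset Strict Implicit. Unset Printing Implicit Defensive.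
Import Order.TTheory GRing.Theory Num.Theory.
Local Open Scope ring_scope.

(* Sequences X = V^L with V = {1..K} represented as 'I_K (token k <-> basis vector e_k). *)
Definition seqs (K L : nat) := {ffun 'I_L -> 'I_K}.

Section UDM.
Variables (R : realFieldType) (K L : nat) (alpha : R -> R) (p0 : seqs K L -> R).

Local Notation X := (seqs K L).

(* UDM forward kernel q_{t|s}(xt | xs), with alpha_{t|s} = alpha t / alpha s:
   <e_a, c e_b + (1-c) 1/K> = c [a = b] + (1-c)/K *)
Definition qfwd (s t : R) (xt xs : X) : R :=
  \prod_(l < L) (alpha t / alpha s * (xt l == xs l)%:R + (1 - alpha t / alpha s) / K%:R).

Definition pmarg (t : R) (x : X) : R := \sum_(x0 : X) p0 x0 * qfwd 0 t x x0.

Definition prev (s t : R) (xs xt : X) : R := pmarg s xs * qfwd s t xt xs / pmarg t xt.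

Definition bridge (s t : R) (xs x0 xt : X) : R :=
  if s == 0 then (xs == x0)%:R
  else qfwd s t xt xs * qfwd 0 s xs x0 / qfwd 0 t xt x0.

Definition qlift (t : R) (x x0 u : X) : R :=
  \prod_(l < L) (alpha t * (x l == x0 l)%:R + (1 - alpha t) * (x l == u l)%:R).

Definition pcond (t : R) (x u : X) : R := \sum_(x0 : X) p0 x0 * qlift t x x0 u.

(* noise-conditioned denoiser p_{0|t}(x0 | x, u)  (x/0 = 0 convention of MathComp) *)
Definition denoiser (t : R) (x0 x u : X) : R := p0 x0 * qlift t x x0 u / pcond t x u.

Definition remask (a : R) (u x x0 : X) : R :=
  \prod_(l < L)
     (if x l != x0 l then (u l == x l)%:R
      else (if u l == x0 l then 1 else a) / (1 + (K%:R - 1) * a)).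

(* Law of (X_{t_0},...,X_{t_n}) produced by the remasked AUDM sampler, obtained by
   marginalising the joint law of all draws (U_{t_n}, X_{t_n}, and for each i:
   X_0'^{(i)}, X_{t_i}, U_{t_i}) over the U's and X_0''s. *)
Definition sampler_law (n : nat) (t : nat -> R) (x : {ffun 'I_n.+1 -> X}) : R :=
  \sum_(u : {ffun 'I_n.+1 -> X}) \sum_(y : {ffun 'I_n -> X})
    ((#|{: X}|%:R)^-1 * pcond (t n) (x ord_max) (u ord_max) *
     \prod_(i < n)
       (denoiser (t i.+1) (y i) (x (inord i.+1)) (u (inord i.+1)) *
        bridge (t i) (t i.+1) (x (inord i)) (y i) (x (inord i.+1)) *
        remask (alpha (t i)) (u (inord i)) (x (inord i)) (y i))).

Definition reverse_law (n : nat) (t : nat -> R) (x : {ffun 'I_n.+1 -> X}) : R :=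
  pmarg (t n) (x ord_max) *
  \prod_(i < n) prev (t i) (t i.+1) (x (inord i)) (x (inord i.+1)).

End UDM.

(* Main.v *)
Require Import Defs.
From HB Require Import structures.
From mathcomp Require Import all_boot all_order all_algebra.
From mathcomp Require Import ring.
Import Order.TTheory GRing.Theory Num.Theory.
Local Open Scope ring_scope.

Section Chain.
Set Implicit Arguments. Unset Strict Implicit. Unset Printing Implicit Defensive.
Variable R : realFieldType.

Definition fext (T : finType) (m : nat) (u : {ffun 'I_m -> T}) (a : T) : {ffun 'I_m.+1 -> T} :=
  [ffun i => if unlift ord_max i is Some j then u j else a].

Lemma fext_max (T : finType) m (u : {ffun 'I_m -> T}) a : fext u a ord_max = a.
Proof. by rewrite ffunE unlift_none. Qed.

Lemma fext_lift (T : finType) m (u : {ffun 'I_m -> T}) a j : fext u a (lift ord_max j) = u j.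
Proof. by rewrite ffunE liftK. Qed.

Lemma ffun_split (T : finType) (m : nat) (f : {ffun 'I_m.+1 -> T} -> R) :
  \sum_u f u = \sum_(u' : {ffun 'I_m -> T}) \sum_(a : T) f (fext u' a).
Proof.
rewrite pair_bigA /=.
rewrite (reindex (fun p : {ffun 'I_m -> T} * T => fext p.1 p.2)) //.
exists (fun u : {ffun 'I_m.+1 -> T} => ([ffun j => u (lift ord_max j)], u ord_max)).
  move=> [u a] _ /=; congr pair; last by rewrite fext_max.
  by apply/ffunP => j; rewrite ffunE fext_lift.
move=> u _ /=; apply/ffunP => i; rewrite ffunE.
case: unliftP => [j ->|->] //; by rewrite ffunE.
Qed.

Lemma val_lift_max m (j : 'I_m) : (lift ord_max j : nat) = j.
Proof. by rewrite /= /bump leqNgt ltn_ord. Qed.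

Lemma fext_inord (T : finType) m (u : {ffun 'I_m.+1 -> T}) a (i : nat) :
  (i <= m)%N -> fext u a (inord i) = u (inord i).
Proof.
move=> him; rewrite ffunE; case: unliftP => [j|] /=.
  move=> /(congr1 (@nat_of_ord _)); rewrite val_lift_max /= inordK ?ltnS ?(leq_trans him) // => hi.
  by congr (u _); apply: val_inj => /=; rewrite inordK ?ltnS // hi.
move=> /(congr1 (@nat_of_ord _)) /=; rewrite inordK ?ltnS ?(leq_trans him) // => hi.
by move: him; rewrite hi ltnn.
Qed.

Lemma fext_widen (T : finType) m (u : {ffun 'I_m -> T}) a (i : 'I_m) h :
  fext u a (widen_ord h i) = u i.
Proof.
have -> : widen_ord h i = lift ord_max i.
  apply: val_inj => /=; by rewrite /bump leqNgt ltn_ord.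
by rewrite fext_lift.
Qed.

Variables (T S : finType) (H : nat -> T -> S -> T -> R).

Definition csum n (F : T -> R) :=
  \sum_(u : {ffun 'I_n.+1 -> T}) \sum_(y : {ffun 'I_n -> S})
    (F (u ord_max) * \prod_(i < n) H i (u (inord i.+1)) (y i) (u (inord i))).

Definition peel k (F : T -> R) (b : T) := \sum_(a : T) \sum_(z : S) F a * H k a z b.

Fixpoint red k (F : T -> R) : T -> R :=
  match k with 0%N => F | k'.+1 => red k' (peel k' F) end.

Lemma red_ext k F F' : F =1 F' -> red k F =1 red k F'.
Proof.
elim: k F F' => [|k IH] F F' e //= b.
apply: IH => c; rewrite /peel; apply: eq_bigr => a _; by rewrite e.
Qed.

Lemma inord_max n : (inord n : 'I_n.+1) = ord_max.
Proof. by apply: val_inj; rewrite /= inordK. Qed.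

Lemma csum_step n F : csum n.+1 F = csum n (peel n F).
Proof.
rewrite /csum ffun_split; apply: eq_bigr => u _.
under eq_bigr => a _ do rewrite ffun_split.
rewrite exchange_big /=; apply: eq_bigr => y _.
rewrite /peel mulr_suml; apply: eq_bigr => a _.
rewrite mulr_suml; apply: eq_bigr => z _.
rewrite fext_max big_ord_recr /=.

have -> : (inord n.+1 : 'I_n.+2) = ord_max by rewrite inord_max.
rewrite !fext_max fext_inord // inord_max.
under eq_bigr => i _ do rewrite fext_widen !fext_inord ?(ltnW (ltn_ord i)) //.

ring.
Qed.

Lemma sum_ffun0 (c : R) : \sum_(y : {ffun 'I_0 -> S}) c = c.
Proof. by rewrite big_const card_ffun card_ord expn0 /= addr0. Qed.

Lemma csum_red n F : csum n F = \sum_b red n F b.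
Proof.
elim: n F => [|n IH] F; last by rewrite csum_step IH.
rewrite /csum /= ffun_split.
rewrite (eq_bigr (fun _ => \sum_a F a)); last first.
  move=> u _; apply: eq_bigr => a _.
  under eq_bigr do rewrite big_ord0 mulr1.
  by rewrite sum_ffun0 fext_max.
rewrite big_const card_ffun card_ord expn0 /= addr0 //.
Qed.

End Chain.

Section Spec.
Set Implicit Arguments. Unset Strict Implicit. Unset Printing Implicit Defensive.
Variables (R : realFieldType) (K L : nat) (hK : (2 <= K)%N) (alpha : R -> R)
  (alpha0 : alpha 0 = 1) (p0 : seqs K L -> R) (p0_ge0 : forall x, 0 <= p0 x).
Local Notation X := (seqs K L).

Lemma cardX : #|{: X}| = (K ^ L)%N.
Proof. by rewrite card_ffun !card_ord. Qed.

Lemma cardXR : (#|{: X}|%:R : R) = \prod_(l < L) (K%:R : R).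
Proof. by rewrite cardX natrX prodr_const card_ord. Qed.

Lemma Kne0 : (K%:R : R) != 0.
Proof. by rewrite pnatr_eq0 -lt0n (leq_trans _ hK). Qed.

Lemma XRne0 : (#|{: X}|%:R : R) != 0.
Proof. by rewrite cardXR; apply/prodf_neq0 => l _; apply: Kne0. Qed.

Lemma sum_ind (k : 'I_K) : \sum_(j : 'I_K) ((k == j)%:R : R) = 1.
Proof.
rewrite (bigD1 k) //= eqxx big1 ?addr0 // => j /negbTE.
by rewrite eq_sym => ->.
Qed.

Lemma sum_qlift (s : R) (x x0 : X) :
  \sum_(u : X) qlift alpha s x x0 u = #|{: X}|%:R * qfwd alpha 0 s x x0.
Proof.
rewrite /qlift -(bigA_distr_bigA (fun l k => alpha s * (x l == x0 l)%:R + (1 - alpha s) * (x l == k)%:R)).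
rewrite cardXR /qfwd -big_split /=; apply: eq_bigr => l _.
rewrite big_split /= -!mulr_sumr sum_ind sumr_const card_ord alpha0 divr1.
rewrite -mulr_natl; field; exact: Kne0.
Qed.

Lemma sum_pcond (s : R) (x : X) :
  \sum_(u : X) pcond alpha p0 s x u = #|{: X}|%:R * pmarg alpha p0 s x.
Proof.
rewrite /pcond exchange_big /pmarg mulr_sumr; apply: eq_bigr => y _.
by rewrite -mulr_sumr sum_qlift mulrCA.
Qed.

Lemma qfwd_remask (s : R) (x y u : X) : 0 < alpha s ->
  qfwd alpha 0 s x y * remask (alpha s) u x y = (#|{: X}|%:R)^-1 * qlift alpha s x y u.
Proof.
move=> ha.
rewrite cardXR -prodfV /qfwd /remask /qlift -!big_split /=; apply: eq_bigr => l _.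
rewrite alpha0 divr1.
have hK1 : (1 + (K%:R - 1) * alpha s) != 0.
  apply/lt0r_neq0/ltr_pwDl => //; apply: mulr_ge0 => //; last exact: ltW.
  by rewrite subr_ge0 ler1n (leq_trans _ hK).
have hK0 := Kne0.
case: (eqVneq (x l) (y l)) => [e|ne] /=.
  rewrite e [y l == u l]eq_sym.
  case: (u l == y l) => /=; field; by rewrite hK1 hK0.
rewrite [x l == u l]eq_sym; case: (u l == x l) => /=; field; by rewrite hK0.
Qed.

Lemma qlift_ge0 (s : R) (x y u : X) : 0 <= alpha s <= 1 -> 0 <= qlift alpha s x y u.
Proof.
move=> /andP [h0 h1]; apply: prodr_ge0 => l _.
by apply: addr_ge0; apply: mulr_ge0; rewrite ?subr_ge0 ?ler0n.
Qed.

Lemma pcond_den (s : R) (x y u : X) : 0 <= alpha s <= 1 ->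
  pcond alpha p0 s x u * denoiser alpha p0 s y x u = p0 y * qlift alpha s x y u.
Proof.
move=> ha; rewrite /denoiser.
have [e|ne] := eqVneq (pcond alpha p0 s x u) 0.
  rewrite e mul0r; symmetry.
  move: e; rewrite /pcond => /psumr_eq0P -> //.
  by move=> z _; apply: mulr_ge0 => //; apply: qlift_ge0.
by rewrite mulrCA divff // mulr1.
Qed.

Lemma qfwd_gt0 (s t : R) (x y : X) : 0 < alpha t / alpha s -> alpha t / alpha s < 1 ->
  0 < qfwd alpha s t x y.
Proof.
move=> h0 h1; apply: prodr_gt0 => l _.
apply: ltr_wpDl; first by apply: mulr_ge0; rewrite ?ler0n // ltW.
apply: divr_gt0; first by rewrite subr_gt0.
by rewrite ltr0n (leq_trans _ hK).
Qed.

Lemma qfwd00 (x y : X) : qfwd alpha 0 0 x y = (x == y)%:R.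
Proof.
rewrite /qfwd alpha0 divr1 subrr mul0r.
under eq_bigr do rewrite mul1r addr0.
case: eqP => [->|ne].
  by apply: big1 => l _; rewrite eqxx.
have : ~~ [forall l, x l == y l].
  apply/negP => /forallP h; apply: ne; apply/ffunP => l; exact/eqP/h.
rewrite negb_forall => /existsP [l hl].
by rewrite (bigD1 l) //= (negbTE hl) mul0r.
Qed.

Lemma bridge_eq (s t : R) (xs x0 xt : X) : qfwd alpha 0 t xt x0 != 0 ->
  bridge alpha s t xs x0 xt = qfwd alpha s t xt xs * qfwd alpha 0 s xs x0 / qfwd alpha 0 t xt x0.
Proof.
move=> hq; rewrite /bridge; case: eqP => // ->.
rewrite qfwd00; case: eqP => [->|]; last by rewrite mulr0 mul0r.
by rewrite mulr1 divff.
Qed.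

Lemma pmarg_gt0 (s : R) (x : X) : \sum_z p0 z = 1 ->
  0 < alpha s -> alpha s < 1 -> 0 < pmarg alpha p0 s x.
Proof.
move=> hs a0 a1.
have hq : forall z, 0 < qfwd alpha 0 s x z.
  by move=> z; apply: qfwd_gt0; rewrite alpha0 divr1.
rewrite lt0r; apply/andP; split; last first.
  by apply: sumr_ge0 => z _; apply: mulr_ge0 => //; apply: ltW.
apply/eqP => /psumr_eq0P h.
have : \sum_z p0 z = 0.
  apply: big1 => z _.
  have /eqP := h (fun z _ => mulr_ge0 (p0_ge0 z) (ltW (hq z))) z isT.
  by rewrite mulf_eq0 (gt_eqF (hq z)) orbF => /eqP.
by rewrite hs => /eqP; rewrite oner_eq0.
Qed.

End Spec.

Theorem mainTheorem7 (R : realFieldType) (K L : nat) (hK : (2 <= K)%N) (hL : (1 <= L)%N)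
  (alpha : R -> R)
  (alpha_decr : forall s t : R, 0 <= s -> s < t -> t <= 1 -> alpha t < alpha s)
  (alpha0 : alpha 0 = 1)
  (alpha_in : forall t : R, 0 < t -> t <= 1 -> 0 < alpha t /\ alpha t < 1)
  (p0 : seqs K L -> R) (p0_ge0 : forall x, 0 <= p0 x) (p0_sum : \sum_(x : seqs K L) p0 x = 1)
  (n : nat) (t : nat -> R) (t0 : t 0%N = 0) (tn : t n = 1)
  (t_incr : forall i : nat, (i < n)%N -> t i < t i.+1)
  (x : {ffun 'I_n.+1 -> seqs K L}) :
  sampler_law alpha p0 t x = reverse_law alpha p0 t x.
Proof.
have tmono : forall j i, (i <= j)%N -> (j <= n)%N -> t i <= t j.
  elim=> [|j IH] i hij hjn; first by move: hij; rewrite leqn0 => /eqP ->.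
  move: hij; rewrite leq_eqVlt => /orP [/eqP -> //|]; rewrite ltnS => hij.
  by apply: le_trans (IH i hij (ltnW hjn)) _; apply/ltW/t_incr.
have t_ge0 : forall i, (i <= n)%N -> 0 <= t i.
  by move=> i hi; rewrite -t0; apply: tmono.
have t_le1 : forall i, (i <= n)%N -> t i <= 1.
  by move=> i hi; rewrite -tn; apply: tmono.
have tS_gt0 : forall i, (i < n)%N -> 0 < t i.+1.
  by move=> i hi; apply: le_lt_trans (t_ge0 i (ltnW hi)) (t_incr i hi).
have aS : forall i, (i < n)%N -> 0 < alpha (t i.+1) /\ alpha (t i.+1) < 1.
  by move=> i hi; apply: alpha_in; [apply: tS_gt0 | apply: t_le1].
have a_pos : forall i, (i <= n)%N -> 0 < alpha (t i).
  case=> [|i] hi; first by rewrite t0 alpha0.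
  by case: (aS i hi).
set xs := fun i : nat => x (inord i).
set c := (#|{: seqs K L}|%:R : R)^-1.
pose H i a y b := denoiser alpha p0 (t i.+1) y (xs i.+1) a *
  bridge alpha (t i) (t i.+1) (xs i) y (xs i.+1) * remask (alpha (t i)) b (xs i) y.
pose F a := c * pcond alpha p0 (t n) (x ord_max) a.
have E1 : sampler_law alpha p0 t x = csum H n F by [].
pose q i := qfwd alpha (t i) (t i.+1) (xs i.+1) (xs i).
pose G k C a := C * (c * pcond alpha p0 (t k) (xs k) a).
have hX := XRne0 R L hK.
have peelG : forall k, (k < n)%N -> forall C, peel H k (G k.+1 C) =1 G k (C * q k).
  move=> k hk C b.
  have [a1 a2] := aS k hk.
  have hsa : 0 <= alpha (t k.+1) <= 1 by rewrite !ltW.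
  rewrite /peel.
  have E : forall a z, G k.+1 C a * H k a z b =
     (C * c * p0 z * bridge alpha (t k) (t k.+1) (xs k) z (xs k.+1) *
      remask (alpha (t k)) b (xs k) z) * qlift alpha (t k.+1) (xs k.+1) z a.
    move=> a z; rewrite /G /H.
    have := pcond_den p0_ge0 (xs k.+1) z a hsa.
    set P := pcond _ _ _ _ _; set D := denoiser _ _ _ _ _ _.
    move=> hPD.
    transitivity (C * c * (P * D) * bridge alpha (t k) (t k.+1) (xs k) z (xs k.+1) *
      remask (alpha (t k)) b (xs k) z); first ring.
    rewrite hPD; ring.
  under eq_bigr => a _ do under eq_bigr => z _ do rewrite E.
  rewrite exchange_big /G /pcond !mulr_sumr; apply: eq_bigr => z _.
  rewrite -mulr_sumr (sum_qlift hK alpha0).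
  have hq0 : qfwd alpha 0 (t k.+1) (xs k.+1) z != 0.
    by rewrite gt_eqF //; apply: (qfwd_gt0 hK); rewrite alpha0 divr1.
  rewrite (bridge_eq alpha0 _ _ hq0).
  have E2 := qfwd_remask hK alpha0 (xs k) z b (a_pos k (ltnW hk)).
  rewrite -/c in E2.
  set Q0s := qfwd alpha 0 (t k) _ _ in E2 *; set rm := remask _ _ _ _ in E2 *.
  set Q0t := qfwd alpha 0 (t k.+1) _ _ in hq0 *.
  rewrite /q.
  set qk := qfwd alpha (t k) (t k.+1) _ _.
  transitivity (C * p0 z * qk * (Q0s * rm) * (c * #|{: seqs K L}|%:R) * (Q0t / Q0t)).
    rewrite /c; field; by rewrite hX hq0.
  rewrite E2 divff // mulr1 /c mulVf //; ring.
have redG : forall k, (k <= n)%N -> forall C, red H k (G k C) =1 G 0 (C * \prod_(i < k) q i).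
  elim=> [|k IH] hk C b; first by rewrite /= big_ord0 mulr1.
  rewrite /= (red_ext _ _ (peelG k hk C)) IH ?(ltnW hk) //.
  rewrite /G big_ord_recr /=; ring.
have FG : F =1 G n 1.
  by move=> a; rewrite /F /G mul1r /xs inord_max.
rewrite E1 csum_red.
under eq_bigr => b _ do rewrite (red_ext _ _ FG) (redG n (leqnn n)).
rewrite /G -!mulr_sumr (sum_pcond hK alpha0) mul1r [c * _]mulrA /c mulVf // mul1r.
have tele : forall m, (m <= n)%N ->
  pmarg alpha p0 (t m) (xs m) * \prod_(i < m) Defs.prev alpha p0 (t i) (t i.+1) (xs i) (xs i.+1) =
  \prod_(i < m) q i * pmarg alpha p0 (t 0) (xs 0).
  elim=> [|m IH] hm; first by rewrite !big_ord0 mulr1 mul1r.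
  rewrite !big_ord_recr /=.
  have hp : pmarg alpha p0 (t m.+1) (xs m.+1) != 0.
    have [a1 a2] := aS m hm.
    by rewrite gt_eqF //; apply: (pmarg_gt0 hK alpha0 p0_ge0).
  have E : pmarg alpha p0 (t m.+1) (xs m.+1) * Defs.prev alpha p0 (t m) (t m.+1) (xs m) (xs m.+1)
     = pmarg alpha p0 (t m) (xs m) * q m.
    rewrite /Defs.prev /q; field; exact: hp.
  set P := \prod_(i < m) Defs.prev _ _ _ _ _ _.
  transitivity (q m * (pmarg alpha p0 (t m) (xs m) * P)).
    transitivity ((pmarg alpha p0 (t m.+1) (xs m.+1) * Defs.prev alpha p0 (t m) (t m.+1) (xs m) (xs m.+1)) * P); first ring.
    rewrite E; ring.
  rewrite IH ?(ltnW hm) //; ring.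
rewrite /reverse_law -(inord_max n) tele //.
Qed.
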